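(* For any rational number $t>1/2$, there exist no minimally $t$-tough split graphs.
   Context: All graphs are finite, simple and undirected. A graph is split if its vertex set can be partitioned into a clique and an independent set. $\omega(H)$ denotes the number of components of $H$. A cutset of $G$ is a vertex set $S$ with $G-S$ disconnected. For positive real $t$, $G$ is $t$-tough if $\omega(G-S)\le |S|/t$ for every cutset $S$; the toughness $\tau(G)$ is the largest such $t$, with $\tau(K_n)=\infty$ for all $n\ge1$. $G$ is minimally $t$-tough if $\tau(G)=t$ and $\tau(G-e)<t$ for every edge $e$ of $G$. *)

(* Defs.v *)
From mathcomp Require Import all_boot all_order all_algebra.
Set Implicit Arguments. Unset Strict Implicit. Unset Printing Implicit Defensive.
Import Order.TTheory GRing.Theory Num.Theory.
Local Open Scope ring_scope.

(* A finite simple graph: vertex set a finType V, edge relation e : rel V,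
   assumed symmetric and irreflexive (hypotheses of the theorem). *)

Section Graphs.
Variable V : finType.

Definition restr (e : rel V) (S : {set V}) : rel V :=
  fun x y => [&& x \notin S, y \notin S & e x y].

Definition ncomp (e : rel V) (S : {set V}) : nat :=
  #|[set [set y | (y \notin S) && connect (restr e S) x y] | x in ~: S]|.

Definition cutset (e : rel V) (S : {set V}) : Prop := (2 <= ncomp e S)%N.

Definition tough (e : rel V) (t : rat) : Prop :=
  0 < t /\ forall S : {set V}, cutset e S -> (ncomp e S)%:R <= (#|S|)%:R / t.

(* tau(G) = t, for t > 0: G is t-tough and not t'-tough for any t' > t
   (tau = "largest t with G t-tough"; tau(K_n) = +oo is never finite). *)
Definition tau_eq (e : rel V) (t : rat) : Prop :=
  tough e t /\ forall t' : rat, t < t' -> ~ tough e t'.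

(* tau(G) < t, for t > 0: G is not t'-tough for any t' >= t
   (covers tau(G) = 0 when no positive t' works, and excludes tau = +oo). *)
Definition tau_lt (e : rel V) (t : rat) : Prop :=
  forall t' : rat, t <= t' -> ~ tough e t'.

Definition del_edge (e : rel V) (u v : V) : rel V :=
  fun x y => e x y && ~~ (((x == u) && (y == v)) || ((x == v) && (y == u))).

Definition minimally_tough (e : rel V) (t : rat) : Prop :=
  tau_eq e t /\ forall u v : V, e u v -> tau_lt (del_edge e u v) t.

Definition split_graph (e : rel V) : Prop :=
  exists K : {set V},
    (forall x y, x \in K -> y \in K -> x != y -> e x y) /\
    (forall x y, x \notin K -> y \notin K -> ~~ e x y).

End Graphs.

(* Main.v *)
Require Import Defs.
From mathcomp Require Import all_boot all_order all_algebra.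
From mathcomp Require Import lra ring zify.
Import Order.TTheory GRing.Theory Num.Theory.
Set Implicit Arguments. Unset Strict Implicit. Unset Printing Implicit Defensive.


Section Gen.
Variable V : finType.

Lemma restr_sym (e0 : rel V) S : symmetric e0 -> symmetric (restr e0 S).
Proof. by move=> hs x y; rewrite /restr hs andbCA. Qed.

Lemma ncomp_le (e0 : rel V) (S R : {set V}) : symmetric e0 ->
  (forall x, x \notin S -> exists2 r, r \in R & connect (restr e0 S) x r) ->
  (ncomp e0 S <= #|R|)%N.
Proof.
move=> hs hR; rewrite /ncomp.
set cls := fun x => [set y | (y \notin S) && connect (restr e0 S) x y].
apply: (leq_trans _ (leq_imset_card cls R)).
apply: subset_leq_card; apply/subsetP => C /imsetP [x]; rewrite inE => xS ->.
have [r rR cxr] := hR x xS.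
apply/imsetP; exists r => //; apply/setP => y; rewrite !inE.
have csym := sym_connect_sym (restr_sym S hs).
case: (y \notin S) => //=; apply/idP/idP => h.
- by apply: connect_trans h; rewrite csym.
- exact: connect_trans cxr h.
Qed.

Lemma ncomp_ge (e0 : rel V) (S R : {set V}) : symmetric e0 ->
  R \subset ~: S ->
  (forall x y, x \in R -> y \in R -> connect (restr e0 S) x y -> x = y) ->
  (#|R| <= ncomp e0 S)%N.
Proof.
move=> hs hRS hR; rewrite /ncomp.
set cls := fun x => [set y | (y \notin S) && connect (restr e0 S) x y].
rewrite -(card_in_imset (f := cls)); last first.
  move=> x y xR yR eq; apply: hR => //.
  have : y \in cls y by rewrite inE connect0 andbT -in_setC (subsetP hRS).
  by rewrite -eq inE => /andP[].
by apply: subset_leq_card; apply: imsetS.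
Qed.

Lemma isolated_conn (r : rel V) y z : (forall z, r y z = false) -> connect r y z -> z = y.
Proof.
move=> hy /connectP [[|z1 p]] /=; first by [].
by rewrite hy.
Qed.

Lemma ncomp_eq (e1 e2 : rel V) S :
  (forall x y, connect (restr e1 S) x y = connect (restr e2 S) x y) ->
  ncomp e1 S = ncomp e2 S.
Proof.
move=> h; rewrite /ncomp; apply: eq_card => C.
by apply/imsetP/imsetP => -[x xS ->]; exists x => //; apply/setP => y; rewrite !inE h.
Qed.

End Gen.


Section Split.
Variable V : finType.
Variable e : rel V.
Hypothesis hs : symmetric e.
Hypothesis hirr : irreflexive e.
Variable K : {set V}.
Hypothesis hK : forall x y, x \in K -> y \in K -> x != y -> e x y.
Hypothesis hI : forall x y, x \notin K -> y \notin K -> ~~ e x y.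

Definition Iso (Z : {set V}) := [set y | (y \notin K) && [forall z in Z, ~~ e y z]].

Lemma lowerK (Z : {set V}) : Z \subset K ->
  ((Z != set0) + #|Iso Z| <= ncomp e (K :\: Z))%N.
Proof.
move=> ZK.
have isoP : forall y, y \in Iso Z -> forall z, restr e (K :\: Z) y z = false.
  move=> y; rewrite inE => /andP[yK /forallP hy] z.
  apply/negbTE; rewrite /restr !inE; apply/negP => /and3P[_ hz eyz].
  case zK: (z \in K); last first.
    by move: (hI yK (negbT zK)); rewrite eyz.
  move: hz; rewrite zK andbT negbK => zZ.
  by move: (hy z); rewrite zZ eyz.
have isoT : Iso Z \subset ~: (K :\: Z).
  by apply/subsetP => y; rewrite !inE => /andP[/negbTE -> _]; rewrite andbF.
have csym := sym_connect_sym (restr_sym (K :\: Z) hs).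
case: (set_0Vmem Z) => [Z0 | [z0 z0Z]].
  rewrite Z0 eqxx add0n -Z0.
  apply: ncomp_ge hs isoT _ => x y xI yI cxy.
  by rewrite (isolated_conn (isoP x xI) cxy).
have z0I : z0 \notin Iso Z by rewrite inE (subsetP ZK z0 z0Z).
have -> : ((Z != set0) + #|Iso Z|)%N = #|z0 |: Iso Z|.
  have Zn : (Z != set0) by apply/set0Pn; exists z0.
  by rewrite cardsU1 z0I Zn.
apply: ncomp_ge hs _ _.
  apply/subsetP => x; rewrite in_setU1 => /orP[/eqP -> | xI]; first by rewrite !inE z0Z.
  exact: (subsetP isoT x xI).
move=> x y; rewrite !in_setU1 => /orP[/eqP -> | xI] /orP[/eqP -> | yI] cxy //.
- by rewrite csym in cxy; rewrite (isolated_conn (isoP y yI) cxy).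
- by rewrite (isolated_conn (isoP x xI) cxy).
- by rewrite (isolated_conn (isoP x xI) cxy).
Qed.

Local Open Scope ring_scope.

Lemma tough_use (t : rat) (T : {set V}) c : tough e t -> (2 <= c)%N ->
  (c <= ncomp e T)%N -> c%:R * t <= #|T|%:R.
Proof.
move=> [t0 ht] c2 cn.
have cut : cutset e T by rewrite /cutset (leq_trans c2 cn).
have := ht T cut; rewrite ler_pdivlMr // => h.
apply: le_trans h; rewrite ler_wpM2r //; [exact: ltW | by rewrite ler_nat].
Qed.

Lemma del_sym u w : symmetric (del_edge e u w).
Proof.
move=> x y; rewrite /del_edge hs; congr (_ && ~~ _).
by rewrite orbC [(y == u) && _]andbC [(y == w) && _]andbC.
Qed.

Lemma ncomp_del_in u w (S : {set V}) : (u \in S) || (w \in S) ->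
  ncomp (del_edge e u w) S = ncomp e S.
Proof.
move=> h; apply: ncomp_eq => x y; apply: eq_connect => a b; rewrite /restr /del_edge.
case aS: (a \in S) => //=; case bS: (b \in S) => //=.
have : ~~ (((a == u) && (b == w)) || ((a == w) && (b == u))).
  apply/negP => /orP[/andP[/eqP au /eqP bw] | /andP[/eqP aw /eqP bu]].
    by move: h; rewrite -au -bw aS bS.
  by move: h; rewrite -aw -bu aS bS.
by move/negbTE ->; rewrite andbT.
Qed.

Lemma ncomp_del_common u w (S : {set V}) z : z \notin S -> z != u -> z != w -> e u z -> e z w ->
  ncomp (del_edge e u w) S = ncomp e S.
Proof.
move=> zS zu zw euz ezw; apply: ncomp_eq => x y; apply/idP/idP.
  apply: connect_sub => a b; rewrite /restr /del_edge => /and3P[aS bS /andP[eab _]].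
  by apply: connect1; rewrite /restr aS bS eab.
apply: connect_sub => a b /and3P[aS bS eab].
case del: (((a == u) && (b == w)) || ((a == w) && (b == u))); last first.
  by apply: connect1; rewrite /restr aS bS /del_edge eab del.
move/orP: del => [/andP[/eqP au /eqP bw] | /andP[/eqP aw /eqP bu]].
  rewrite au bw in aS bS *.
  apply: (connect_trans (y := z)); apply: connect1;
    rewrite /restr /del_edge ?aS ?bS zS /= ?euz ?ezw !(negbTE zu) !(negbTE zw) ?andbF //=.
rewrite aw bu in aS bS *.
apply: (connect_trans (y := z)); apply: connect1;
  rewrite /restr /del_edge ?aS ?bS zS /= 1?hs ?euz ?ezw !(negbTE zu) !(negbTE zw) ?andbF //=.
Qed.

Definition Wp u w (S : {set V}) :=
  [set y | [&& y \notin K, y \notin S, ~~ e y u & ~~ e y w]].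

Lemma ncomp_del_sep u w (S : {set V}) : u \in K -> w \in K -> u \notin S -> w \notin S ->
  (forall z, z \in K -> z \notin S -> (z == u) || (z == w)) ->
  (ncomp (del_edge e u w) S <= 2 + #|Wp u w S|)%N.
Proof.
move=> uK wK uS wS hKS.
have hR : forall x, x \notin S -> exists2 r, r \in [set u; w] :|: Wp u w S & connect (restr (del_edge e u w) S) x r.
  move=> x xS; case xK: (x \in K).
  by exists x; [rewrite !inE; move: (hKS x xK xS) => /orP[->|->]; rewrite ?orbT | exact: connect0].
have xu : (x == u) = false by apply/negbTE; apply/negP => /eqP xu; move: xK; rewrite xu uK.
have xw : (x == w) = false by apply/negbTE; apply/negP => /eqP xw; move: xK; rewrite xw wK.
case exu: (e x u).
  exists u; first by rewrite !inE eqxx.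
  by apply: connect1; rewrite /restr /del_edge xS uS exu xu xw.
case exw: (e x w).
  exists w; first by rewrite !inE eqxx orbT.
  by apply: connect1; rewrite /restr /del_edge xS wS exw xu xw.
exists x; last exact: connect0.
by rewrite !inE xK xS exu exw orbT.
apply: (leq_trans (ncomp_le (del_sym u w) hR)).
rewrite cardsU; apply: (leq_trans (leq_subr _ _)); rewrite leq_add2r cards2.
by case: (u != w).
Qed.

End Split.

Local Open Scope ring_scope.

Lemma arith (k m a b X W : nat) (D t : rat) :
  1 / 2 < t ->
  (W + a + b = m + X)%N -> (b <= a)%N -> (X <= b)%N -> (a <= m)%N -> (1 <= m)%N ->
  m%:R * 2 <= D -> m%:R * (2 * t) <= D ->
  D <= a%:R + (k%:R - 1) * b%:R ->
  2 * t <= k%:R - 1 ->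
  k%:R - 2 + X%:R < t * (2 + W%:R) ->
  ((a < m)%N -> t * (1 + m%:R - a%:R) <= k%:R - 1) ->
  ((b < m)%N -> t * (1 + m%:R - b%:R) <= k%:R - 1) ->
  ((2 <= m)%N -> t * m%:R <= k%:R) -> False.
Proof.
move=> ht hsum hba hXb ham hm1 hD2 hDt hDk hdk hC hLu hLw hK0.
have t0 : 0 < t by clear -ht; lra.
have hsumR : W%:R + a%:R + b%:R = m%:R + X%:R :> rat by rewrite -!natrD hsum.
have eW : W%:R = m%:R + X%:R - a%:R - b%:R :> rat by rewrite -hsumR; ring.
have [d [d2 dt dD]] : exists d : rat, [/\ 2 <= d, 2 * t <= d & m%:R * d <= D].
  case: (lerP t 1) => ht1.
    by exists 2; split => //; clear -ht1 hD2; lra.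
  by exists (2 * t); split => //; clear -ht1 hDt; lra.
have m1R : 1 <= m%:R :> rat by rewrite ler1n.
have W0R : 0 <= W%:R :> rat by [].
have X0R : 0 <= X%:R :> rat by [].
have b0R : 0 <= b%:R :> rat by [].
have abR : b%:R <= a%:R :> rat by rewrite ler_nat.
case: (ltnP b m) => hbm; last first.
  have [eW0 eXm] : W = 0%N /\ X = m by clear -hbm hba ham hsum hXb; lia.
  rewrite eW0 eXm in hC; clear -hC hdk m1R; lra.
have hLw' := hLw hbm.
have key : X%:R - 1 < t * (1 + X%:R - a%:R).
  have e : t * (2 + W%:R) = t * (1 + m%:R - b%:R) + t * (1 + X%:R - a%:R) by rewrite eW; ring.
  clear -e hLw' hC; lra.
case: X hXb hsum hsumR hC key eW X0R => [|X] hXb hsum hsumR hC key eW X0R.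
  have md2 : m%:R * 2 <= m%:R * d by rewrite ler_wpM2l.
  case: (ltnP a m) => ham'; last first.
    have [eam eb] : a = m /\ b = 0%N by clear -ham' ham hsum hba; lia.
    rewrite eb eam in hDk; clear -hDk md2 dD m1R; lra.
  have hLu' := hLu ham'.
  have kb : t * (b%:R - 1) < 1.
    have e : t * (2 + W%:R) = t * (1 + m%:R - a%:R) + t * (1 - b%:R) by rewrite eW; ring.
    have e2 : t * (b%:R - 1) = - (t * (1 - b%:R)) by ring.
    clear -e e2 hLu' hC; lra.
  have b2R : b%:R <= 2 :> rat.
    rewrite (ler_nat _ _ 2) leqNgt; apply/negP => hb3.
    have hb3R : 3 <= b%:R :> rat by rewrite (ler_nat _ 3).
    have : t * 2 <= t * (b%:R - 1) by rewrite ler_wpM2l ?(ltW t0) //; clear -hb3R; lra.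
    clear -kb ht hb3R; lra.
  have emd : m%:R * d = W%:R * d + a%:R * d + b%:R * d by rewrite eW; ring.
  have P1 : 0 <= (a%:R - b%:R) * (d - 1) by apply: mulr_ge0; clear -abR d2; lra.
  have P4 : 0 <= (W%:R * d) * (2 - b%:R).
    by apply: mulr_ge0; [apply: mulr_ge0; clear -d2 W0R; lra | clear -b2R; lra].
  have P5 : 0 <= b%:R * (d - 2) by apply: mulr_ge0; clear -d2 b0R; lra.
  have P3 : b%:R * (t * (2 + W%:R)) <= b%:R * (d * (2 + W%:R) / 2).
    rewrite ler_wpM2l //.
    have : t * (2 + W%:R) <= (d / 2) * (2 + W%:R) by rewrite ler_wpM2r; clear -dt W0R; lra.
    clear; move=> h; have e : d / 2 * (2 + W%:R) = d * (2 + W%:R) / 2 by ring.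
    by rewrite -e.
  case: (posnP b) => hb.
    have amR : a%:R <= m%:R :> rat by rewrite ler_nat.
    rewrite hb mulr0 addr0 in hDk.
    clear -hDk amR dD m1R md2; lra.
  have P2 : b%:R * (k%:R - 2) < b%:R * (t * (2 + W%:R)).
    by rewrite ltr_pM2l ?ltr0n //; clear -hC; lra.
  clear -P1 P2 P3 P4 P5 emd dD hDk; lra.
have aX : (a <= X.+1)%N.
  rewrite leqNgt; apply/negP => hXa.
  have haR : X.+2%:R <= a%:R :> rat by rewrite ler_nat.
  have e1 : X.+2%:R = X%:R + 2 :> rat by rewrite -addn2 natrD.
  have e2 : X.+1%:R = X%:R + 1 :> rat by rewrite -addn1 natrD.
  rewrite e1 in haR; rewrite e2 in key.
  have : t * (1 + (X%:R + 1) - a%:R) <= 0 by apply: mulr_ge0_le0; clear -haR t0; lra.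
  move=> hneg; have X0' : 0 <= X%:R :> rat by [].
  clear -key hneg X0'; lra.
have ea : a = X.+1 by clear -aX hXb hba; lia.
have eb : b = X.+1 by clear -aX hXb hba; lia.
have m2 : (2 <= m)%N by clear -eb hbm; lia.
have hK0' := hK0 m2.
have X0 : X = 0%N.
  case: X hXb hsum hsumR hC key aX ea eb eW X0R => // X _ hsum hsumR hC _ _ ea eb eW X0R.
  rewrite ea eb in eW.
  have h2 : 2 <= X.+2%:R :> rat by rewrite (ler_nat _ 2).
  have e : t * (2 + W%:R) = t * m%:R + t * (2 - X.+2%:R) by rewrite eW; ring.
  have : t * (2 - X.+2%:R) <= 0 by apply: mulr_ge0_le0; clear -h2 t0; lra.
  move=> hneg; exfalso; clear -e h2 hC hK0' hneg; lra.
rewrite X0 in ea eb eW hC.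
rewrite ea eb in hDk eW.
have eW' : W%:R = m%:R - 1 :> rat by rewrite eW; ring.
rewrite eW' in hC.
have P : t * (2 + (m%:R - 1)) <= (d / 2) * (2 + (m%:R - 1)).
  by rewrite ler_wpM2r; clear -dt m1R; lra.
have m2R : 2 <= m%:R :> rat by rewrite (ler_nat _ 2).
have Q : 0 <= (d - 2) * (m%:R - 2) by apply: mulr_ge0; clear -d2 m2R; lra.
have e1 : 1%:R + (k%:R - 1) * 1%:R = k%:R :> rat by ring.
rewrite e1 in hDk.
clear -P Q hC hDk dD m2R d2; lra.
Qed.


Section Main.
Variable V : finType.
Variable e : rel V.
Hypothesis hs : symmetric e.
Hypothesis hirr : irreflexive e.
Variable K : {set V}.
Hypothesis hK : forall x y, x \in K -> y \in K -> x != y -> e x y.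
Hypothesis hI : forall x y, x \notin K -> y \notin K -> ~~ e x y.
Hypothesis hmax : forall y, y \notin K -> exists2 z, z \in K & ~~ e y z.
Variable t : rat.
Hypothesis ht : (1 / 2 < t)%R.
Hypothesis htough : tough e t.

Local Open Scope ring_scope.

Definition Ny y := [set z in K | e y z].
Definition deg z := #|[set y in ~: K | e y z]|.

Lemma ny_2t y : y \notin K -> 2 * t <= #|Ny y|%:R.
Proof.
move=> yK.
have [z zK eyz] := hmax yK.
set Z := K :\: Ny y.
have ZK : Z \subset K by apply: subsetDl.
have hl := lowerK hs hI ZK.
have Zn : (Z != set0) by apply/set0Pn; exists z; rewrite !inE zK eyz.
have yI : y \in Iso e K Z.
  rewrite inE yK /=; apply/forallP => x; apply/implyP; rewrite !inE => /andP[hn xK].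
  by move: hn; rewrite xK.
have eT : K :\: Z = Ny y.
  apply/setP => x; rewrite !inE; case: (x \in K); by rewrite ?andbT ?andbF ?negbK.
rewrite -eT.
have := tough_use htough (c := 2) (T := K :\: Z) (leqnn 2).
rewrite mulrC; apply.
apply: leq_trans hl; rewrite Zn add1n ltnS card_gt0; apply/set0Pn; by exists y.
Qed.

Lemma ny_k y : y \notin K -> (#|Ny y| < #|K|)%N.
Proof.
move=> yK; have [z zK eyz] := hmax yK.
rewrite (cardsD1 z K) zK add1n ltnS; apply: subset_leq_card.
apply/subsetP => x; rewrite !inE => /andP[xK exy]; rewrite xK andbT.
by apply/negP => /eqP xz; move: eyz; rewrite -xz exy.
Qed.

Lemma tK0 : (2 <= #|~: K|)%N -> t * #|~: K|%:R <= #|K|%:R.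
Proof.
move=> m2.
have hl := lowerK hs hI (sub0set K).
rewrite eqxx add0n setD0 in hl.
have eI : Iso e K set0 = ~: K.
  by apply/setP => y; rewrite !inE andbC; case: (y \in K); rewrite ?andbF ?andbT //; apply/forallP => x; rewrite inE.
rewrite eI in hl.
rewrite mulrC; exact: (tough_use htough m2 hl).
Qed.

Lemma tLu u : u \in K -> (deg u < #|~: K|)%N ->
  t * (1 + #|~: K|%:R - (deg u)%:R) <= #|K|%:R - 1.
Proof.
move=> uK lt.
have uKs : [set u] \subset K by rewrite sub1set.
have hl := lowerK hs hI uKs.
have Zn : [set u] != set0 by apply/set0Pn; exists u; rewrite inE.
rewrite Zn in hl.
have hI2 : (#|Iso e K [set u]| + deg u)%N = #|~: K|.
  rewrite -(cardsID [set y | e y u] (~: K)) addnC; congr (_ + _)%N.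
    by rewrite /deg; apply: eq_card => y; rewrite !inE.
  apply: eq_card => y; rewrite !inE [RHS]andbC; congr (_ && _).
  apply/forallP/idP => [h | h x]; first by move: (h u); rewrite inE eqxx.
  by apply/implyP; rewrite inE => /eqP ->.
have c2 : (2 <= 1 + #|Iso e K [set u]|)%N by rewrite add1n ltnS; lia.
have := tough_use htough c2 hl.
have e1 : (1 + #|Iso e K [set u]|)%:R = 1 + #|~: K|%:R - (deg u)%:R :> rat.
  by rewrite -hI2 !natrD; ring.
have e2 : #|K|%:R = 1 + #|K :\ u|%:R :> rat by rewrite (cardsD1 u K) uK natrD.
rewrite e1 e2 mulrC => h; lra.
Qed.

Lemma dcount : (\sum_(y in ~: K) #|Ny y| = \sum_(z in K) deg z)%N.
Proof.
have h1 : forall y, #|Ny y| = (\sum_(z in K) (e y z : nat))%N.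
  move=> y; rewrite -sum1_card big_mkcond [RHS]big_mkcond /=; apply: eq_bigr => z _.
  by rewrite !inE; case: (z \in K); case: (e y z).
have h2 : forall z, deg z = (\sum_(y in ~: K) (e y z : nat))%N.
  move=> z; rewrite /deg -sum1_card big_mkcond [RHS]big_mkcond /=; apply: eq_bigr => y _.
  by rewrite !inE; case: (y \in K); case: (e y z).
rewrite (eq_bigr _ (fun y _ => h1 y)) (eq_bigr _ (fun z _ => h2 z)).
exact: exchange_big.
Qed.

Lemma sum_bound u w : u \in K -> (forall z, z \in K :\ u -> (deg z <= deg w)%N) ->
  (\sum_(z in K) deg z <= deg u + #|K :\ u| * deg w)%N.
Proof.
move=> uK hw; rewrite (big_setD1 u uK) /= leq_add2l -sum_nat_const.
by apply: leq_sum => z zK; apply: hw.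
Qed.

End Main.

Local Open Scope ring_scope.

Lemma main_del (V : finType) (e : rel V) (hs : symmetric e) (K : {set V})
  (hK : forall x y, x \in K -> y \in K -> x != y -> e x y)
  (hI : forall x y, x \notin K -> y \notin K -> ~~ e x y)
  (hmax : forall y, y \notin K -> exists2 z, z \in K & ~~ e y z)
  (t : rat) (ht : 1 / 2 < t) (htough : tough e t) y0 : y0 \notin K ->
  exists u w, [/\ u \in K, w \in K, u != w & tough (del_edge e u w) t].
Proof.
move=> y0K.
have t0 : 0 < t by clear -ht; lra.
have n2 : (2 <= #|Ny e K y0|)%N.
  have h := ny_2t hs hI hmax htough y0K.
  have : (1 : rat) < #|Ny e K y0|%:R by clear -h ht; lra.
  by rewrite (ltr_nat _ 1).
have [z0 z0N] : exists z0, z0 \in Ny e K y0.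
  by apply/set0Pn; rewrite -card_gt0; apply: leq_trans n2.
have z0K : z0 \in K by move: z0N; rewrite inE => /andP[].
case: (@arg_maxnP _ z0 (fun z => z \in K) (deg e K) z0K) => u uK umax.
have [z1 z1N] : exists z1, z1 \in Ny e K y0 :\ u.
  apply/set0Pn; rewrite -card_gt0.
  have := cardsD1 u (Ny e K y0); case: (u \in Ny e K y0) => /= h; clear -h n2; lia.
have z1Ku : z1 \in K :\ u.
  by move: z1N; rewrite !inE => /andP[-> /andP[-> _]].
case: (@arg_maxnP _ z1 (fun z => z \in K :\ u) (deg e K) z1Ku) => w wKu wmax.
have wK : w \in K by move: wKu; rewrite !inE => /andP[].
have wu : w != u by move: wKu; rewrite !inE => /andP[].
exists u, w; split => //; first by rewrite eq_sym.
split => // S cut.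
rewrite ler_pdivlMr // leNgt; apply/negP => hbad.
have [_ gt] := htough.
case h1: ((u \in S) || (w \in S)).
  have eq := ncomp_del_in e h1.
  rewrite /cutset eq in cut; rewrite eq in hbad.
  have := gt S cut; rewrite ler_pdivlMr // => h; clear -h hbad; lra.
case h2: [exists z, [&& z \notin S, z != u, z != w, e u z & e z w]].
  case/existsP: h2 => z /and5P[zS zu zw euz ezw].
  have eq := ncomp_del_common hs zS zu zw euz ezw.
  rewrite /cutset eq in cut; rewrite eq in hbad.
  have := gt S cut; rewrite ler_pdivlMr // => h; clear -h hbad; lra.
move/negbT: h1; rewrite negb_or => /andP[uS wS].
have hKS : forall z, z \in K -> z \notin S -> (z == u) || (z == w).
  move=> z zK zS; apply/negPn/negP; rewrite negb_or => /andP[zu zw].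
  move/negbT: h2 => /existsPn /(_ z); rewrite zS zu zw /=.
  by rewrite (hK _ _ uK zK) ?(hK _ _ zK wK) // eq_sym.
have hX : forall y, y \notin K -> e y u -> e y w -> y \in S.
  move=> y yK eyu eyw; apply/negPn/negP => yS.
  move/negbT: h2 => /existsPn /(_ y); rewrite yS hs eyu eyw /= !andbT.
  have yu : y != u by apply/negP => /eqP yu; move: yK; rewrite yu uK.
  have yw : y != w by apply/negP => /eqP yw; move: yK; rewrite yw wK.
  by rewrite yu yw.
have hup := ncomp_del_sep hs uK wK uS wS hKS.
set Nu := [set y in ~: K | e y u].
set Nw := [set y in ~: K | e y w].
set Wall := ~: K :\: (Nu :|: Nw).
have eWp : Wp e K u w S = Wall :\: S.
  apply/setP => y; rewrite !inE.
  by case: (y \in K); case: (y \in S); case: (e y u); case: (e y w).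
rewrite eWp in hup.
have c1 := cardsID S Wall.
have c2 := cardsID (Nu :|: Nw) (~: K).
have eNU : ~: K :&: (Nu :|: Nw) = Nu :|: Nw.
  by apply/setIidPr/subsetP => y; rewrite !inE => /orP[/andP[]|/andP[]].
rewrite eNU in c2.
have c3 := cardsUI Nu Nw.
have c4 := cardsID K S.
have sK : K :\: [set u; w] \subset S :&: K.
  apply/subsetP => z; rewrite !inE negb_or => /andP[/andP[zu zw] zK].
  rewrite zK andbT; apply/negPn/negP => zS.
  by move: (hKS z zK zS); rewrite (negbTE zu) (negbTE zw).
have sI : (Nu :&: Nw) :|: (Wall :&: S) \subset S :\: K.
  apply/subsetP => y; rewrite !inE.
  case yK: (y \in K); case yS: (y \in S); case eyu: (e y u); case eyw: (e y w) => //=.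
  by have := hX y (negbT yK) eyu eyw; rewrite yS.
have dI : (Nu :&: Nw) :&: (Wall :&: S) = set0.
  apply/setP => y; rewrite !inE.
  by case: (y \in K); case: (y \in S); case: (e y u); case: (e y w).
have c5 := cardsU (Nu :&: Nw) (Wall :&: S).
rewrite dI cards0 subn0 in c5.
have c6 := subset_leq_card sK.
have c7 := subset_leq_card sI.
rewrite c5 in c7.
have c8 := cardsID [set u; w] K.
have eUW : K :&: [set u; w] = [set u; w].
  by apply/setIidPr; rewrite subUset !sub1set uK wK.
rewrite eUW cards2 (eq_sym u) wu in c8.
have hS : (#|K :\: [set u; w]| + #|Nu :&: Nw| + #|Wall :&: S| <= #|S|)%N by clear -c4 c6 c7 c8; lia.
have hbad' : #|S|%:R < (2 + #|Wall :\: S|)%:R * t.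
  apply: (lt_le_trans hbad); rewrite ler_wpM2r ?(ltW t0) //.
  by rewrite ler_nat.
have hC : #|K|%:R - 2 + #|Nu :&: Nw|%:R < t * (2 + #|Wall|%:R).
  have hSR : (#|K :\: [set u; w]| + #|Nu :&: Nw| + #|Wall :&: S|)%:R <= #|S|%:R :> rat.
    by rewrite ler_nat.
  rewrite !natrD in hSR hbad'.
  have eK : #|K|%:R = #|K :\: [set u; w]|%:R + 2 :> rat by rewrite -c8 natrD addrC.
  have eW : #|Wall|%:R = #|Wall :&: S|%:R + #|Wall :\: S|%:R :> rat by rewrite -c1 natrD.
  have ts : 0 <= t * #|Wall :&: S|%:R by apply: mulr_ge0; [exact: ltW | exact: ler0n].
  rewrite eK eW.
  have e1 : t * (2 + (#|Wall :&: S|%:R + #|Wall :\: S|%:R)) = (2 + #|Wall :\: S|%:R) * t + t * #|Wall :&: S|%:R by ring.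
  rewrite e1.
  have s0 : 0 <= #|Wall :&: S|%:R :> rat by [].
  clear -hSR hbad' ts s0; lra.
have hsum : (#|Wall| + #|Nu| + #|Nw| = #|~: K| + #|Nu :&: Nw|)%N.
  clear -c2 c3; rewrite -/Wall in c2; lia.
have hba : (#|Nw| <= #|Nu|)%N by exact: (umax w wK).
have hXb : (#|Nu :&: Nw| <= #|Nw|)%N by apply: subset_leq_card; apply: subsetIr.
have ham : (#|Nu| <= #|~: K|)%N.
  by apply: subset_leq_card; apply/subsetP => y; rewrite inE => /andP[].
have hm1 : (1 <= #|~: K|)%N by rewrite card_gt0; apply/set0Pn; exists y0; rewrite inE.
have nyy : forall y, y \in ~: K -> (2 <= #|Ny e K y|)%N.
  move=> y; rewrite inE => yK.
  have h := ny_2t hs hI hmax htough yK.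
  have : (1 : rat) < #|Ny e K y|%:R by clear -h ht; lra.
  by rewrite (ltr_nat _ 1).
set D := (\sum_(y in ~: K) #|Ny e K y|)%N.
have hD2 : #|~: K|%:R * 2 <= D%:R :> rat.
  have : (#|~: K| * 2 <= D)%N.
    by rewrite -sum_nat_const /D; apply: leq_sum => y yK; exact: nyy.
  by rewrite -(ler_nat rat) natrM.
have hDt : #|~: K|%:R * (2 * t) <= D%:R.
  rewrite mulr_natl -sumr_const /D natr_sum; apply: ler_sum => y.
  rewrite inE => yK; by have := ny_2t hs hI hmax htough yK.
have hDk : D%:R <= #|Nu|%:R + (#|K|%:R - 1) * #|Nw|%:R :> rat.
  have h : (D <= #|Nu| + #|K :\ u| * #|Nw|)%N.
    by rewrite /D dcount; apply: sum_bound uK _ => z zK; exact: wmax.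
  have eK : #|K|%:R - 1 = #|K :\ u|%:R :> rat.
    by rewrite (cardsD1 u K) uK natrD /=; ring.
  by rewrite eK -natrM -natrD ler_nat.
have hdk : 2 * t <= #|K|%:R - 1.
  have g1 := ny_2t hs hI hmax htough y0K.
  have g2 := ny_k hmax y0K.
  have : (#|Ny e K y0| + 1 <= #|K|)%N by rewrite addn1.
  rewrite -(ler_nat rat) natrD => h3; clear -g1 h3; lra.
have hLu : (#|Nu| < #|~: K|)%N -> t * (1 + #|~: K|%:R - #|Nu|%:R) <= #|K|%:R - 1.
  exact: (tLu hs hI ht htough uK).
have hLw : (#|Nw| < #|~: K|)%N -> t * (1 + #|~: K|%:R - #|Nw|%:R) <= #|K|%:R - 1.
  exact: (tLu hs hI ht htough wK).
have hK0 : (2 <= #|~: K|)%N -> t * #|~: K|%:R <= #|K|%:R.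
  exact: (tK0 hs hI htough).
exact: (@arith #|K| #|~: K| #|Nu| #|Nw| #|Nu :&: Nw| #|Wall| D%:R t ht hsum hba hXb ham hm1 hD2 hDt hDk hdk hC hLu hLw hK0).
Qed.



Local Open Scope ring_scope.

Definition splitb (V : finType) (e : rel V) (K : {set V}) : bool :=
  [forall x, forall y, ((x \in K) && (y \in K) && (x != y)) ==> e x y] &&
  [forall x, forall y, ((x \notin K) && (y \notin K)) ==> ~~ e x y].

Arguments splitb {V}.

Lemma no_cut (V : finType) (e : rel V) (hs : symmetric e) (K : {set V}) :
  (forall x y, x \in K -> y \in K -> x != y -> e x y) ->
  (forall y, y \in K) -> forall S, (ncomp e S <= 1)%N.
Proof.
move=> hK hall S.
case: (pickP (fun x => x \notin S)) => [x0 x0S | none].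
  have := ncomp_le (R := [set x0]) hs (S := S).
  rewrite cards1; apply => x xS; exists x0; first by rewrite inE.
  case: (eqVneq x x0) => [-> | xx0]; first exact: connect0.
  by apply: connect1; rewrite /restr xS x0S (hK _ _ (hall x) (hall x0) xx0).
have := ncomp_le (R := set0) hs (S := S).
rewrite cards0 => h; apply: leq_trans (h _) _ => // x xS.
by move: (none x); rewrite xS.
Qed.

Arguments no_cut {V e} hs {K}.

Unset Implicit Arguments.

Theorem mainTheorem5 (V : finType) (e : rel V) (t : rat) :
  symmetric e -> irreflexive e -> split_graph e -> 1 / 2 < t ->
  ~ minimally_tough e t.
Proof.
move=> hs hirr [K0 [hK0 hI0]] ht [[htough htau] hmin].
have PK0 : splitb e K0.
  apply/andP; split; apply/forallP => x; apply/forallP => y; apply/implyP.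
    by case/andP => /andP[xK yK] xy; apply: hK0.
  by case/andP => xK yK; apply: hI0.
case: (@arg_maxnP _ K0 (splitb e) (fun K => #|K|) PK0) => K PK Kmax.
case/andP: PK => /forallP hKb /forallP hIb.
have hK : forall x y, x \in K -> y \in K -> x != y -> e x y.
  by move=> x y xK yK xy; move: (hKb x) => /forallP /(_ y) /implyP; apply; rewrite xK yK.
have hI : forall x y, x \notin K -> y \notin K -> ~~ e x y.
  by move=> x y xK yK; move: (hIb x) => /forallP /(_ y) /implyP; apply; rewrite xK yK.
have hmax : forall y, y \notin K -> exists2 z, z \in K & ~~ e y z.
  move=> y yK.
  case hex: [exists z in K, ~~ e y z].
    by case/existsP: hex => z /andP[zK eyz]; exists z.
  exfalso.
  have hall : forall z, z \in K -> e y z.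
    move=> z zK; apply/negPn/negP => eyz.
    by move/negbT: hex => /negP; apply; apply/existsP; exists z; rewrite zK.
  have P' : splitb e (y |: K).
    apply/andP; split; apply/forallP => x; apply/forallP => x'; apply/implyP; rewrite !inE.
      case/andP => /andP[/orP[/eqP -> | xK] /orP[/eqP -> | x'K]] xx'.
      - by rewrite eqxx in xx'.
      - exact: hall.
      - by rewrite hs; apply: hall.
      - exact: hK.
    by rewrite !negb_or => /andP[/andP[_ xK] /andP[_ x'K]]; apply: hI.
  have := Kmax _ P'; rewrite /= cardsU1 yK add1n ltnn.
  by [].
have [y0 y0K] : exists y0, y0 \notin K.
  case: (pickP (fun y => y \notin K)) => [y0 y0K | none]; first by exists y0.
  exfalso.
  have hall : forall y, y \in K by move=> y; move: (none y) => /= /negbFE.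
  apply: (htau (t + 1)); first by lra.
  split; first by lra.
  move=> S cut; move: cut; rewrite /cutset.
  by move: (no_cut hs hK hall S) => h1 h2; have := leq_trans h2 h1.
have [u [w [uK wK uw htd]]] := main_del hs hK hI hmax ht (conj htough.1 htough.2) y0K.
exact: (hmin u w (hK _ _ uK wK uw) t (lexx t) htd).
Qed.
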